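(* Let $a_1,\dots,a_n$ and $b_1,\dots,b_n$ be complex numbers with all $a_i\ne0$, and let $a=\sum_{i=1}^n a_i$, $b=\sum_{i=1}^n b_i$. Suppose that for some reals $1>\tau>\epsilon>0$ we have $$\left|\frac{b_i}{a_i}-1\right|\le\epsilon\ \ (i=1,\dots,n)\qquad\text{and}\qquad |a|\ge\tau\sum_{i=1}^n|a_i|.$$ Then $a\ne0$, $b\ne0$, and the angle between $a$ and $b$ (as vectors in $\mathbb{R}^2\cong\mathbb{C}$) does not exceed $\arcsin\frac{\epsilon}{\tau}$. *)

(* Defs.v *)
From Stdlib Require Import Reals.
From Coquelicot Require Import Coquelicot.
Open Scope R_scope.

(* The (unoriented) angle in [0, pi] between two nonzero complex numbers
   z and w, viewed as vectors of R^2: cos(angle) = <z,w>/(|z||w|),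
   where the Euclidean inner product is <z,w> = Re (z * conj w). *)
Definition vec_angle (z w : C) : R :=
  acos (Re (z * Cconj w) / (Cmod z * Cmod w)).

(* Main.v *)
Require Import Defs.
From Stdlib Require Import Reals.
From Coquelicot Require Import Coquelicot.
From Stdlib Require Import Lra Psatz.
Open Scope R_scope.

Lemma sum_diff (a b : nat -> C) (eps : R) (n : nat) :
  (forall i, (i <= n)%nat -> a i <> RtoC 0) ->
  (forall i, (i <= n)%nat -> Cmod (b i / a i - 1) <= eps) ->
  Cmod (sum_n b n - sum_n a n) <= eps * sum_n (fun i => Cmod (a i)) n.
Proof.
  intros Ha Hr. induction n as [|n IH].
  - rewrite !sum_O.
    assert (E : (b 0%nat - a 0%nat = (b 0%nat / a 0%nat - 1) * a 0%nat)%C)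
      by (field; apply Ha; lia).
    rewrite E, Cmod_mult. apply Rmult_le_compat_r; [apply Cmod_ge_0|apply Hr; lia].
  - rewrite !sum_Sn.
    assert (E : (plus (sum_n b n) (b (S n)) - plus (sum_n a n) (a (S n))
       = (sum_n b n - sum_n a n) + (b (S n) / a (S n) - 1) * a (S n))%C).
    { assert (a (S n) <> RtoC 0) by (apply Ha; lia). unfold plus; simpl. field. auto. }
    rewrite E. eapply Rle_trans; [apply Cmod_triangle|].
    rewrite Cmod_mult. unfold plus; simpl. rewrite Rmult_plus_distr_l.
    apply Rplus_le_compat.
    + apply IH; intros; [apply Ha|apply Hr]; lia.
    + apply Rmult_le_compat_r; [apply Cmod_ge_0|apply Hr; lia].
Qed.

Lemma sum_ge0 (f : nat -> R) (n : nat) : (forall i, 0 <= f i) ->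
  f 0%nat <= sum_n f n.
Proof.
  intros H. induction n.
  - rewrite sum_O. lra.
  - rewrite sum_Sn. unfold plus; simpl. specialize (H (S n)). lra.
Qed.
Lemma real_key (x y u v r : R) : 0 <= r < 1 -> 0 < x^2 + y^2 ->
  sqrt ((u-x)^2 + (v-y)^2) <= r * sqrt (x^2+y^2) ->
  0 < u^2 + v^2 /\
  sqrt (1 - r²) <= (x*u + y*v) / (sqrt (x^2+y^2) * sqrt (u^2+v^2)) <= 1.
Proof.
  intros Hr Hq H.
  set (q := x^2+y^2) in *. set (s := u^2+v^2). set (p := x*u+y*v).
  assert (Eq : q = x^2+y^2) by reflexivity. assert (Es : s = u^2+v^2) by reflexivity.
  assert (Ep : p = x*u+y*v) by reflexivity. clearbody q s p.
  assert (HD : (u-x)^2 + (v-y)^2 <= r^2 * q).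
  { assert (h0 : 0 <= sqrt ((u-x)^2 + (v-y)^2)) by apply sqrt_pos.
    assert (h1 : sqrt ((u-x)^2 + (v-y)^2) * sqrt ((u-x)^2 + (v-y)^2) = (u-x)^2 + (v-y)^2) by (apply sqrt_sqrt; apply Rplus_le_le_0_compat; apply pow2_ge_0).
    assert (h2 : sqrt q * sqrt q = q) by (apply sqrt_sqrt; lra).
    assert (0 <= sqrt q) by apply sqrt_pos.
    nra. }
  assert (Hp : 2*p >= s + (1-r^2)*q) by (subst p s q; nra).
  assert (Hs : 0 < s).
  { destruct (Req_dec (u^2+v^2) 0) as [E|E].
    - assert (u = 0) by (clear -E; nra). assert (v = 0) by (clear -E; nra). subst u v. exfalso. assert (HH : (0-x)^2+(0-y)^2 = q) by (subst q; ring). rewrite HH in HD. clear -HD Hq Hr. assert (r^2 < 1) by nra. nra.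
    - subst s; nra. }
  split; [exact Hs|].
  assert (Hk : 0 < 1 - r²) by (unfold Rsqr; nra).
  assert (Hp2 : (1-r²)*q*s <= p*p).
  { replace (r^2) with (r²) in Hp by (unfold Rsqr; ring).
    set (k := 1 - r²) in *. clearbody k.
    assert (0 <= k*q) by nra.
    assert (4*(p*p) >= (s+k*q)*(s+k*q)) by nra.
    assert (0 <= (s - k*q)*(s-k*q)) by apply Rle_0_sqr.
    nra. }
  assert (Hpp : 0 < p) by (assert (0 <= (1-r^2)*q) by (apply Rmult_le_pos; [unfold Rsqr in Hk; simpl; lra | lra]); lra).
  assert (sq : 0 < sqrt q) by (apply sqrt_lt_R0; lra).
  assert (ss : 0 < sqrt s) by (apply sqrt_lt_R0; lra).
  split.
  - apply Rle_div_r; [nra|].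
    rewrite <- Rmult_assoc, <- !sqrt_mult_alt by nra.
    rewrite <- (sqrt_square p) by lra.
    apply sqrt_le_1_alt. lra.
  - apply Rle_div_l; [nra|]. rewrite Rmult_1_l.
    generalize (sqrt_cauchy x y u v). subst p q s. unfold Rsqr. simpl. rewrite !Rmult_1_r. lra.
Qed.

Lemma acos_le (c r : R) : 0 <= r < 1 -> sqrt (1 - r²) <= c <= 1 -> acos c <= asin r.
Proof.
  intros Hr Hc.
  assert (Hs0 : 0 <= sqrt (1 - r²)) by apply sqrt_pos.
  assert (Hb := asin_bound r). assert (Ha := acos_bound c). assert (HPI := PI_RGT_0).
  assert (Ht : 0 <= asin r).
  { destruct (Rle_or_lt 0 (asin r)) as [h|h]; auto.
    assert (sin (asin r) < 0) by (apply sin_lt_0_var; lra).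
    rewrite sin_asin in H by lra. lra. }
  destruct (Rle_or_lt (acos c) (asin r)) as [h|h]; auto.
  exfalso.
  assert (cos (acos c) < cos (asin r)) by (apply cos_decreasing_1; lra).
  rewrite cos_acos, cos_asin in H by lra. lra.
Qed.

(* The n >= 1 numbers a_1..a_n are indexed as a 0, ..., a m (m = n - 1). *)
Theorem lemma4p2 (m : nat) (a b : nat -> C) (tau eps : R)
  (Ha : forall i, (i <= m)%nat -> a i <> RtoC 0)
  (Heps : 0 < eps) (Htaueps : eps < tau) (Htau : tau < 1)
  (Hratio : forall i, (i <= m)%nat -> Cmod (b i / a i - 1) <= eps)
  (Hsum : Cmod (sum_n a m) >= tau * sum_n (fun i => Cmod (a i)) m) :
  sum_n a m <> RtoC 0 /\ sum_n b m <> RtoC 0 /\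
  vec_angle (sum_n a m) (sum_n b m) <= asin (eps / tau).
Proof.
  assert (HD := sum_diff a b eps m Ha Hratio).
  assert (HS := sum_ge0 (fun i => Cmod (a i)) m (fun i => Cmod_ge_0 _)). simpl in HS.
  assert (Ha0 : 0 < Cmod (a 0%nat)).
  { destruct (Cmod_ge_0 (a 0%nat)) as [h|h]; auto.
    exfalso. apply (Ha 0%nat); [lia|]. apply Cmod_eq_0. auto. }
  set (S := sum_n (fun i => Cmod (a i)) m) in *. clearbody S.
  set (A := sum_n a m) in *. set (B := sum_n b m) in *. clearbody A B.
  assert (HA : 0 < Cmod A) by nra.
  assert (HD2 : Cmod (B - A) <= (eps / tau) * Cmod A).
  { apply Rle_trans with (eps * S); auto.
    apply Rmult_le_reg_l with tau; [lra|].
    replace (tau * (eps / tau * Cmod A)) with (eps * Cmod A) by (field; lra).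
    nra. }
  assert (Hr : 0 <= eps / tau < 1).
  { split. apply Rlt_le, Rdiv_lt_0_compat; lra.
    apply Rmult_lt_reg_r with tau; [lra|]. unfold Rdiv. rewrite Rmult_assoc, Rinv_l by lra. lra. }
  destruct A as [x y]. destruct B as [u v].
  assert (Hq : 0 < x^2 + y^2).
  { change (Cmod (x,y)) with (sqrt (x^2+y^2)) in HA.
    destruct (Rle_or_lt (x^2+y^2) 0) as [h|h]; auto.
    assert (x^2+y^2 = 0) by nra. rewrite H in HA. rewrite sqrt_0 in HA. lra. }
  assert (HD3 : sqrt ((u-x)^2 + (v-y)^2) <= eps/tau * sqrt (x^2+y^2)).
  { assert (E : Cmod ((u,v) - (x,y))%C = sqrt ((u-x)^2+(v-y)^2))
      by (unfold Cmod; simpl; f_equal; ring).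
    rewrite <- E. change (sqrt (x^2+y^2)) with (Cmod (x,y)). exact HD2. }
  destruct (real_key x y u v (eps/tau) Hr Hq HD3) as [Hs Hc].
  split; [|split].
  - intros E. injection E; intros; subst. nra.
  - intros E. injection E; intros; subst. nra.
  - unfold vec_angle. apply acos_le; auto.
    assert (E : Re ((x,y) * Cconj (u,v))%C = x*u+y*v) by (simpl; ring).
    rewrite E. exact Hc.
Qed.
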